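(* There is an infinite family of directed graphs (with unit arc lengths) such that, with $n$ the number of vertices, the greedy algorithm g-HHL finds a hierarchical hub labeling of size $\Omega(n^{3/2})$ while the optimal hierarchical hub labeling has size $O(n)$.
   Context: For a directed graph $G=(V,E)$, $n=|V|$, a hub labeling assigns forward and backward labels $L_f(v),L_b(v)\subseteq V$ such that for every ordered pair $(u,w)$ with $w$ reachable from $u$, $L_f(u)\cap L_b(w)$ contains a vertex on a shortest $u$–$w$ path; its size is $\sum_v(|L_f(v)|+|L_b(v)|)$. It is hierarchical (HHL) if there is a bijection $\pi:V\to\{1,\dots,n\}$ with $u\in L_f(v)\cup L_b(v)\Rightarrow\pi(u)\le\pi(v)$. g-HHL: start with empty labels; $U$ is the set of uncovered pairs. For each not-yet-selected vertex $v$, the center graph is the bipartite graph with two copies $X,Y$ of $V$ and an arc $(u,w)$ for each $(u,w)\in U$ having a shortest $u$–$w$ path through $v$. Each iteration selects a not-yet-selected $v$ whose center graph has the most edges and adds $v$ to $L_f(u)$ for all non-isolated $u\in X$ and to $L_b(w)$ for all non-isolated $w\in Y$, until all pairs are covered. *)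

(* Defs.v *)
From mathcomp Require Import all_boot.
From mathcomp Require Import boolp.

Set Implicit Arguments.
Unset Strict Implicit.
Unset Printing Implicit Defensive.

Section HubLabels.
Variable V : finType.
Variable e : rel V.  (* directed graph; every arc has length 1 *)

Definition walk (u w : V) (k : nat) : Prop :=
  exists p : seq V, [/\ path e u p, last u p = w & size p = k].

Definition reachable (u w : V) : Prop := exists k, walk u w k.

Definition dist_is (u w : V) (d : nat) : Prop :=
  walk u w d /\ forall k, walk u w k -> d <= k.

Definition on_sp (u v w : V) : Prop :=
  exists d1 d2, [/\ dist_is u v d1, dist_is v w d2 & dist_is u w (d1 + d2)].

Definition covers (Lf Lb : V -> {set V}) (u w : V) : Prop :=
  exists h, [/\ h \in Lf u, h \in Lb w & on_sp u h w].

Definition is_hub_labeling (Lf Lb : V -> {set V}) : Prop :=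
  forall u w, reachable u w -> covers Lf Lb u w.

Definition hl_size (Lf Lb : V -> {set V}) : nat :=
  \sum_(v : V) (#|Lf v| + #|Lb v|).

Definition is_hierarchical (Lf Lb : V -> {set V}) : Prop :=
  exists pi : V -> 'I_#|V|, bijective pi /\
    forall u v, u \in Lf v :|: Lb v -> (pi u <= pi v)%N.

Definition labels := ((V -> {set V}) * (V -> {set V}))%type.

Definition empty_labels : labels := (fun _ => set0, fun _ => set0).

Definition uncovered (L : labels) : {set V * V} :=
  [set p | `[< reachable p.1 p.2 /\ ~ covers L.1 L.2 p.1 p.2 >]].

Definition center (L : labels) (v : V) : {set V * V} :=
  [set p in uncovered L | `[< on_sp p.1 v p.2 >]].

(* select v: add v to L_f(u) for non-isolated u in X, to L_b(w) for non-isolated w in Y *)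
Definition gstep (L : labels) (v : V) : labels :=
  let C := center L v in
  (fun u => if [exists w, (u, w) \in C] then v |: L.1 u else L.1 u,
   fun w => if [exists u, (u, w) \in C] then v |: L.2 w else L.2 w).

Definition grun (s : seq V) : labels := foldl gstep empty_labels s.

(* s is a complete execution of g-HHL (with some tie-breaking):
   at every iteration there are uncovered pairs, the chosen vertex is not yet
   selected and its center graph has the maximum number of edges among the
   not-yet-selected vertices; at the end all pairs are covered. *)
Definition ghhl_run (s : seq V) : Prop :=
  (forall s1 v s2, s = s1 ++ v :: s2 ->
     [/\ uncovered (grun s1) != set0, v \notin s1 &
         forall x, x \notin s1 -> #|center (grun s1) x| <= #|center (grun s1) v|])
  /\ uncovered (grun s) = set0.

End HubLabels.

(* Main.v *)
Require Import Defs.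
From mathcomp Require Import all_boot.
From mathcomp Require Import boolp.
From mathcomp Require Import zify.

Set Implicit Arguments.
Unset Strict Implicit.
Unset Printing Implicit Defensive.

Section Abs.
Variable V : finType.
Variable lvl : V -> nat.
Variable par : V -> V.
Hypothesis lvl_le2 : forall v, lvl v <= 2.
Hypothesis par_hub : forall v, lvl v = 2 -> lvl (par v) = 1.

Definition ge (u v : V) : bool :=
  ((lvl u == 0) && (lvl v == 1)) || [&& lvl u == 1, lvl v == 2 & par v == u].

Lemma ge_lvl u v : ge u v -> lvl v = (lvl u).+1.
Proof. by rewrite /ge => /orP [/andP [/eqP -> /eqP ->] | /and3P [/eqP -> /eqP -> _]]. Qed.

Lemma path_lvl u p : path ge u p -> lvl (last u p) = lvl u + size p.
Proof.
elim: p u => [|v p IH] u /=; first by rewrite addn0.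
case/andP => /ge_lvl H /IH ->. by rewrite H addSnnS.
Qed.

Lemma walk_lvl u w k : walk ge u w k -> lvl w = lvl u + k.
Proof. by case=> p [Hp <- <-]; apply: path_lvl. Qed.

Lemma walk0 u w : walk ge u w 0 -> u = w.
Proof. case=> p [Hp Hl Hs]; case: p Hp Hl Hs => [|x p] //= _ ->. Qed.

Lemma walk1 u w : walk ge u w 1 -> ge u w.
Proof. case=> p [Hp Hl Hs]; case: p Hp Hl Hs => [|x [|y p]] //= /andP [H _] <- //. Qed.

Lemma walk_cat u v w k1 k2 : walk ge u v k1 -> walk ge v w k2 -> walk ge u w (k1 + k2).
Proof.
case=> p1 [H1 L1 S1] [p2 [H2 L2 S2]]; exists (p1 ++ p2).
by rewrite cat_path last_cat size_cat L1 H1 H2 L2 S1 S2.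
Qed.

Lemma walk_dist u w k : walk ge u w k -> dist_is ge u w k.
Proof.
move=> W; split=> // k' W'.
by move: (walk_lvl W) (walk_lvl W') => -> /eqP; rewrite eqn_add2l => /eqP ->.
Qed.

Lemma reach_refl u : reachable ge u u.
Proof. by exists 0, [::]. Qed.

Lemma reach_edge u v : ge u v -> reachable ge u v.
Proof. by move=> H; exists 1, [:: v]; rewrite /= H. Qed.

Lemma reach_trans u v w : reachable ge u v -> reachable ge v w -> reachable ge u w.
Proof. by case=> k1 W1 [k2 W2]; exists (k1 + k2); apply: walk_cat W1 W2. Qed.

Lemma on_sp_reach u v w : reachable ge u v -> reachable ge v w -> on_sp ge u v w.
Proof.
case=> k1 W1 [k2 W2]; exists k1, k2; split; try exact: walk_dist.
exact: walk_dist (walk_cat W1 W2).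
Qed.

Lemma on_sp_inv u v w : on_sp ge u v w -> reachable ge u v /\ reachable ge v w.
Proof. by case=> d1 [d2 [[W1 _] [W2 _] _]]; split; [exists d1 | exists d2]. Qed.


Notation reach := (reachable ge).

Lemma mem_center L v u w :
  ((u, w) \in center ge L v) = `[< reach u w /\ ~ covers ge L.1 L.2 u w >] && `[< on_sp ge u v w >].
Proof. by rewrite !inE. Qed.

Lemma grun_sub1 s u x : x \in (grun ge s).1 u -> x \in s /\ reach u x.
Proof.
elim/last_ind: s u x => [|s v IH] u x; first by rewrite /= inE.
rewrite /grun foldl_rcons -/(grun ge s) /gstep /=.
case: ifP => [/existsP [w Hw] | _]; last by move/IH=> [H1 H2]; rewrite mem_rcons in_cons H1 orbT.
rewrite in_setU1 => /orP [/eqP -> | /IH [H1 H2]]; last by rewrite mem_rcons in_cons H1 orbT.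
rewrite mem_rcons mem_head; split => //.
by move: Hw; rewrite mem_center => /andP [_ /asboolP /on_sp_inv []].
Qed.

Lemma grun_sub2 s w x : x \in (grun ge s).2 w -> x \in s /\ reach x w.
Proof.
elim/last_ind: s w x => [|s v IH] w x; first by rewrite /= inE.
rewrite /grun foldl_rcons -/(grun ge s) /gstep /=.
case: ifP => [/existsP [u Hu] | _]; last by move/IH=> [H1 H2]; rewrite mem_rcons in_cons H1 orbT.
rewrite in_setU1 => /orP [/eqP -> | /IH [H1 H2]]; last by rewrite mem_rcons in_cons H1 orbT.
rewrite mem_rcons mem_head; split => //.
by move: Hu; rewrite mem_center => /andP [_ /asboolP /on_sp_inv []].
Qed.

Lemma foldl_mono2 s (L : labels V) w : L.2 w \subset (foldl (gstep ge) L s).2 w.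
Proof.
elim: s L => [|v s IH] L /=; first exact: subxx.
apply: subset_trans (IH _); rewrite /gstep /=; case: ifP => _; [exact: subsetUr | exact: subxx].
Qed.

Definition src v := lvl v == 0.

Lemma Lf_src_empty s1 x : all src s1 -> lvl x = 0 -> x \notin s1 ->
  (grun ge s1).1 x = set0.
Proof.
move=> Ha Hx Hn; apply/setP => y; rewrite in_set0; apply/negbTE/negP.
move/grun_sub1 => [ys [k W]].
have Hk : k = 0 by have := walk_lvl W; rewrite Hx (eqP (allP Ha y ys)); lia.
by subst k; move/walk0: W => Exy; move: Hn; rewrite Exy ys.
Qed.

Lemma center_src s1 x w : all src s1 -> lvl x = 0 -> x \notin s1 -> reach x w ->
  (x, w) \in center ge (grun ge s1) x.
Proof.
move=> Ha Hx Hn Hr; rewrite mem_center; apply/andP; split; apply/asboolP.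
  split=> // -[h [hin _ _]]; by rewrite Lf_src_empty // in_set0 in hin.
exact: on_sp_reach (reach_refl _) Hr.
Qed.

Definition S := [set v | lvl v == 0].
Definition M := 1 + (#|V| - #|S|).

Lemma reach_src x w : lvl x = 0 -> lvl w != 0 -> reach x w.
Proof.
move=> Hx Hw; have := lvl_le2 w.
have [H1|H1] := eqVneq (lvl w) 1.
  by move=> _; apply: reach_edge; rewrite /ge Hx H1.
move=> H; have H2 : lvl w = 2 by lia.
apply: (@reach_trans _ (par w)); apply: reach_edge; rewrite /ge ?Hx ?par_hub ?H2 ?eqxx ?orbT //.
Qed.

Lemma center_src_card s1 x : all src s1 -> lvl x = 0 -> x \notin s1 ->
  M <= #|center ge (grun ge s1) x|.
Proof.
move=> Ha Hx Hn.
have sub : [set (x, w) | w in x |: ~: S] \subset center ge (grun ge s1) x.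
  apply/subsetP => p /imsetP [w Hw ->]; apply: center_src => //.
  move: Hw; rewrite in_setU1 => /orP [/eqP -> | ]; first exact: reach_refl.
  by rewrite !inE => Hw; apply: reach_src.
apply: leq_trans (subset_leq_card sub).
rewrite card_imset; last by move=> a b [].
rewrite cardsU1 !inE Hx /= /M -(cardsC S); lia.
Qed.

Definition Ch h := [set w | (lvl w == 2) && (par w == h)].
Definition Inn v := [set u | `[< reach u v >]].
Definition Out v := [set w | `[< reach v w >]].

Lemma center_sub L v : center ge L v \subset setX (Inn v) (Out v).
Proof.
apply/subsetP => -[u w]; rewrite mem_center => /andP [_ /asboolP /on_sp_inv [H1 H2]].
by rewrite !inE; apply/andP; split; apply/asboolP.
Qed.

Variable q : nat.
Hypothesis hch : forall h, #|Ch h| <= q.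
Hypothesis hin1 : (#|S| + 1) * (q + 1) < M.
Hypothesis hin2 : #|S| + 2 < M.

Lemma center_small L v : lvl v != 0 -> #|center ge L v| < M.
Proof.
move=> Hv; apply: leq_ltn_trans (subset_leq_card (center_sub L v)) _.
rewrite cardsX; have := lvl_le2 v.
have [H1|H1] := eqVneq (lvl v) 1.
  move=> _.
  have s1 : Inn v \subset v |: S.
    apply/subsetP => u; rewrite !inE => /asboolP [k W].
    have := walk_lvl W; rewrite H1 => Hk.
    case: k W Hk => [|[|k]] W Hk; first by rewrite (walk0 W) eqxx.
      by rewrite orbC; apply/orP; left; apply/eqP; lia.
    lia.
  have s2 : Out v \subset v |: Ch v.
    apply/subsetP => w; rewrite !inE => /asboolP [k W].
    have := walk_lvl W; rewrite H1 => Hk.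
    case: k W Hk => [|[|k]] W Hk; first by rewrite (walk0 W) eqxx.
      move/walk1: W; rewrite /ge H1 /= => /andP [-> ->]; by rewrite orbT.
    have := lvl_le2 w; lia.
  apply: leq_ltn_trans hin1; apply: leq_mul.
    apply: leq_trans (subset_leq_card s1) _; rewrite cardsU1; case: (_ \notin _); lia.
  apply: leq_trans (subset_leq_card s2) _; rewrite cardsU1; have := hch v; case: (_ \notin _); lia.
move=> H; have H2 : lvl v = 2 by move: Hv; lia.
have s1 : Inn v \subset v |: (par v |: S).
  apply/subsetP => u; rewrite !inE => /asboolP [k W].
  have := walk_lvl W; rewrite H2 => Hk.
  case: k W Hk => [|[|[|k]]] W Hk; first by rewrite (walk0 W) eqxx.
  - move/walk1: W; rewrite /ge H2 /= andbF /= => /andP [_ /eqP ->]; by rewrite eqxx orbT.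
  - by rewrite orbC; apply/orP; left; apply/orP; right; apply/eqP; lia.
  - lia.
have s2 : Out v \subset [set v].
  apply/subsetP => w; rewrite !inE => /asboolP [k W].
  have := walk_lvl W; rewrite H2 => Hk.
  case: k W Hk => [|k] W Hk; first by rewrite (walk0 W) eqxx.
  have := lvl_le2 w; lia.
apply: leq_ltn_trans hin2.
have c1 := subset_leq_card s1; have c2 := subset_leq_card s2.
rewrite cards1 in c2. rewrite !cardsU1 in c1.
move: c1 c2; case: (_ \notin _); case: (_ \notin _); nia.
Qed.


Section Run.
Variable s : seq V.
Hypothesis Hrun : ghhl_run ge s.

Lemma prefix_src s1 v s2 x0 : s = s1 ++ v :: s2 -> all src s1 -> lvl x0 = 0 ->
  x0 \notin s1 -> lvl v = 0.
Proof.
move=> Es Ha Hx Hn; case: (Hrun) => /(_ s1 v s2 Es) [_ _ Hmax] _.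
have := Hmax x0 Hn; have := center_src_card Ha Hx Hn.
case: (eqVneq (lvl v) 0) => // Hv.
have := center_small (grun ge s1) Hv; lia.
Qed.

Lemma src_split x : lvl x = 0 -> exists t1 t2, s = t1 ++ x :: t2 /\ all src t1.
Proof.
move=> Hx.
suff : forall r t, s = t ++ r -> all src t -> exists t1 t2, s = t1 ++ x :: t2 /\ all src t1.
  by move/(_ s [::]); apply.
elim=> [|v r IH] t Es Ha.
  case: (boolP (x \in t)) => [xt | xt].
    case/splitPr: xt Es Ha => p1 p2 Es; rewrite all_cat => /andP [Ha _].
    by exists p1, p2; rewrite Es cats0.
  case: Hrun => _; rewrite Es cats0 => /setP /(_ (x, x)).
  rewrite inE in_set0 => /asboolP []; split; first exact: reach_refl.
  by case=> h [hin _ _]; rewrite Lf_src_empty // in_set0 in hin.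
case: (boolP (x \in t)) => [xt | xt].
  case/splitPr: xt Es Ha => p1 p2 Es; rewrite all_cat => /andP [Ha _].
  by exists p1, (p2 ++ v :: r); rewrite Es -catA.
have Hv := prefix_src Es Ha Hx xt.
apply: (IH (rcons t v)); first by rewrite cat_rcons.
by rewrite all_rcons /src Hv.
Qed.

Lemma src_in_Lb x w : lvl x = 0 -> lvl w = 2 -> x \in (grun ge s).2 w.
Proof.
move=> Hx Hw; have [t1 [t2 [Es Ha]]] := src_split Hx.
case: (Hrun) => /(_ t1 x t2 Es) [_ Hn _] _.
have Hw0 : lvl w != 0 by rewrite Hw.
have Hc := center_src Ha Hx Hn (reach_src Hx Hw0).
rewrite Es /grun foldl_cat /=.
apply: (subsetP (foldl_mono2 _ _ _)); rewrite /gstep /= ifT ?setU11 //.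
by apply/existsP; exists x.
Qed.

Definition Y := [set v | lvl v == 2].

Lemma greedy_lb : #|Y| * #|S| <= hl_size (grun ge s).1 (grun ge s).2.
Proof.
rewrite /hl_size -sum_nat_const.
apply: leq_trans (_ : \sum_v #|(grun ge s).2 v| <= _); last first.
  by apply: leq_sum => v _; apply: leq_addl.
rewrite [X in _ <= X](bigID (fun v => v \in Y)) /=; apply: leq_trans (leq_addr _ _).
apply: leq_sum => v; rewrite inE => /eqP Hv; apply: subset_leq_card.
by apply/subsetP => x; rewrite inE => /eqP Hx; apply: src_in_Lb.
Qed.

End Run.


Definition H := [set h | lvl h == 1].
Definition OLf v := if lvl v == 0 then v |: H else [set v].
Definition OLb v := if lvl v == 2 then par v |: [set v] else [set v].

Lemma OL_hub : is_hub_labeling ge OLf OLb.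
Proof.
move=> u w [k W]; have Hk := walk_lvl W.
case: k W Hk => [|[|[|k]]] W Hk.
- move/walk0: W => <-; exists u; split; last exact: on_sp_reach (reach_refl _) (reach_refl _).
    by rewrite /OLf; case: ifP => _; rewrite ?setU11 ?set11.
  by rewrite /OLb; case: ifP => _; rewrite ?in_setU1 ?set11 ?orbT.
- have E := walk1 W; move: (E); rewrite /ge => /orP [/andP [/eqP H0 /eqP H1] | /and3P [/eqP H1 /eqP H2 /eqP Hp]].
    exists w; split; last exact: on_sp_reach (reach_edge E) (reach_refl _).
      by rewrite /OLf H0 eqxx in_setU1 !inE H1 eqxx orbT.
    by rewrite /OLb H1 /= set11.
  exists u; split; last exact: on_sp_reach (reach_refl _) (reach_edge E).
    by rewrite /OLf H1 /= set11.
  by rewrite /OLb H2 eqxx Hp setU11.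
- have H0 : lvl u = 0 by have := lvl_le2 w; lia.
  have H2 : lvl w = 2 by lia.
  exists (par w); split.
  + by rewrite /OLf H0 eqxx in_setU1 !inE par_hub // eqxx orbT.
  + by rewrite /OLb H2 eqxx setU11.
  + apply: on_sp_reach; apply: reach_edge; rewrite /ge ?H0 ?par_hub ?H2 ?eqxx ?orbT //.
- have := lvl_le2 w; lia.
Qed.

Lemma OL_mem u v : u \in OLf v :|: OLb v -> u = v \/ (lvl u = 1 /\ lvl v <> 1).
Proof.
rewrite in_setU => /orP [Hf | Hb].
- move: Hf; rewrite /OLf; case: ifP => H0; rewrite ?in_setU1 ?inE.
  + case/orP => [/eqP ->|Hh]; [by left | right; split; [exact/eqP | move/eqP: H0; lia]].
  + by move/eqP ->; left.
- move: Hb; rewrite /OLb; case: ifP => H2; rewrite ?in_setU1 ?inE.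
  + case/orP => [/eqP -> | /eqP ->]; last by left.
    right; split; [exact: par_hub (eqP H2) | move/eqP: H2; lia].
  + by move/eqP ->; left.
Qed.

Lemma OL_size : hl_size OLf OLb <= 3 * #|V| + #|S| * #|H|.
Proof.
rewrite /hl_size.
apply: leq_trans (_ : \sum_v (3 + (if lvl v == 0 then #|H| else 0)) <= _).
  apply: leq_sum => v _; rewrite /OLf /OLb.
  have cU : forall (a : V) A, #|a |: A| <= 1 + #|A|.
    by move=> a A; rewrite cardsU1; case: (_ \notin _).
  case: ifP => _; case: ifP => _; have := cU v H; have := cU (par v) [set v];
  rewrite ?cards1; lia.
rewrite big_split /= sum_nat_const -big_mkcond /= sum_nat_const.
rewrite mulnC leq_add2l; apply: eq_leq; congr (_ * _); by rewrite /S cardsE.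
Qed.

End Abs.
Lemma card_range m lo hi : lo <= hi <= m.+1 ->
  #|[set i : 'I_m.+1 | lo <= i < hi]| = hi - lo.
Proof.
move=> /andP [Hb1 Hb2].
have -> : [set i : 'I_m.+1 | lo <= i < hi] =
          [set (inord (lo + nat_of_ord j) : 'I_m.+1) | j in [set: 'I_(hi - lo)]].
  apply/setP => i; rewrite inE; apply/idP/imsetP.
    move=> /andP [Hi1 Hi2]; have Hj : i - lo < hi - lo by lia.
    exists (Ordinal Hj); rewrite ?inE //; apply: val_inj; rewrite /= inordK; lia.
  case=> j _ ->; rewrite inordK; have := ltn_ord j; lia.
rewrite card_imset ?cardsT ?card_ord //.
move=> j1 j2 /(congr1 (@nat_of_ord _)); rewrite !inordK; try (have := ltn_ord j1; have := ltn_ord j2; lia).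
by move=> E; apply: val_inj; rewrite /=; lia.
Qed.

Section Inst.
Variable k : nat.
Definition nI := (k + k + k.+1 * k.+1).+1.
Definition lvlI (i : 'I_nI) : nat := if i < k.+1 then 1 else if i < (k + k).+1 then 0 else 2.
Definition parI (i : 'I_nI) : 'I_nI := inord ((i - (k + k).+1) %/ k.+1).

Lemma lvlI_le2 v : lvlI v <= 2.
Proof. by rewrite /lvlI; case: ifP => // _; case: ifP. Qed.

Lemma parI_val v : lvlI v = 2 -> nat_of_ord (parI v) = (v - (k + k).+1) %/ k.+1.
Proof.
rewrite /lvlI /parI => Hv; rewrite inordK //.
apply: leq_ltn_trans (leq_div _ _) _; have := ltn_ord v; rewrite /nI; lia.
Qed.

Lemma parI_lt v : lvlI v = 2 -> nat_of_ord (parI v) < k.+1.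
Proof.
move=> Hv; rewrite parI_val // ltn_divLR //.
move: Hv; have := ltn_ord v; rewrite /lvlI /nI; case: ifP => //; case: ifP => //; lia.
Qed.

Lemma parI_hub v : lvlI v = 2 -> lvlI (parI v) = 1.
Proof. by move=> Hv; rewrite /lvlI parI_lt. Qed.

Lemma SI : #|S lvlI| = k.
Proof.
have -> : S lvlI = [set i : 'I_nI | k.+1 <= i < (k + k).+1].
  apply/setP => i; rewrite !inE /lvlI; case: ifP => ?; try (case: ifP => ?); lia.
rewrite card_range /nI; lia.
Qed.

Lemma YI : #|Y lvlI| = k.+1 * k.+1.
Proof.
have -> : Y lvlI = [set i : 'I_nI | (k + k).+1 <= i < nI].
  apply/setP => i; rewrite !inE /lvlI; have := ltn_ord i; case: ifP => ?; try (case: ifP => ?); lia.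
rewrite card_range /nI; lia.
Qed.

Lemma HI : #|H lvlI| = k.+1.
Proof.
have -> : H lvlI = [set i : 'I_nI | 0 <= i < k.+1].
  apply/setP => i; rewrite !inE /lvlI; case: ifP => ?; try (case: ifP => ?); lia.
rewrite card_range /nI; lia.
Qed.

Lemma ChI h : #|Ch lvlI parI h| <= k.+1.
Proof.
have sub : Ch lvlI parI h \subset
   [set (inord ((k + k).+1 + val h * k.+1 + val j) : 'I_nI) | j in [set: 'I_k.+1]].
  apply/subsetP => v; rewrite !inE => /andP [/eqP Hv /eqP Hp].
  have Hq := parI_val Hv; rewrite Hp in Hq.
  apply/imsetP; exists (Ordinal (ltn_pmod (v - (k + k).+1) (ltn0Sn k))); rewrite ?inE //.
  have E : nat_of_ord v = (k + k).+1 + h * k.+1 + (v - (k + k).+1) %% k.+1.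
    have := divn_eq (v - (k + k).+1) k.+1; rewrite -Hq.
    move: Hv; rewrite /lvlI; case: ifP => //; case: ifP => //; lia.
  by apply: val_inj; rewrite /= inordK -E.
by apply: leq_trans (subset_leq_card sub) _; rewrite (leq_trans (leq_imset_card _ _)) // cardsT card_ord.
Qed.

Lemma MI : M lvlI = 1 + k.+1 * k.+2.
Proof. by rewrite /M SI card_ord /nI; lia. Qed.

End Inst.

Theorem mainTheorem7 :
  exists c C : nat, [/\ 0 < c, 0 < C &
    forall N : nat, exists n : nat, N <= n /\ exists e : rel 'I_n,
      (* every run of g-HHL yields size Omega(n^{3/2}), i.e. n^3 <= c * size^2 *)
      (forall s : seq 'I_n, ghhl_run e s ->
         n ^ 3 <= c * (hl_size (grun e s).1 (grun e s).2) ^ 2) /\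
      (* an optimal HHL has size O(n) *)
      (exists Lf Lb : 'I_n -> {set 'I_n},
         [/\ is_hub_labeling e Lf Lb, is_hierarchical Lf Lb & hl_size Lf Lb <= C * n])].
Proof.
exists 343, 4; split => // N.
pose k := N.+1.
have hin1 : (#|S (@lvlI k)| + 1) * (k.+1 + 1) < M (@lvlI k).
  rewrite SI MI; nia.
have hin2 : #|S (@lvlI k)| + 2 < M (@lvlI k).
  rewrite SI MI; nia.
exists (nI k); split; first by rewrite /nI; nia.
exists (ge (@lvlI k) (@parI k)); split.
  move=> s Hrun.
  have := greedy_lb (@lvlI_le2 k) (@parI_hub k) (@ChI k) hin1 hin2 Hrun.
  rewrite YI SI; set z := hl_size _ _ => Hz.
  have h1 : nI k <= 7 * (k * k) by rewrite /nI /k; nia.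
  have h2 : k * k * k <= z by rewrite /k in Hz *; nia.
  apply: leq_trans (_ : (7 * (k * k)) ^ 3 <= _).
    by rewrite leq_exp2r.
  have -> : (7 * (k * k)) ^ 3 = 343 * (k * k * k) ^ 2 by rewrite !expnS expn0; nia.
  by rewrite leq_mul2l leq_exp2r.
exists (OLf (@lvlI k)), (OLb (@lvlI k) (@parI k)); split.
- apply: (OL_hub _ _ hin1 hin2) => //; [exact: lvlI_le2 | exact: parI_hub].
- exists (cast_ord (esym (card_ord (nI k)))); split.
    by exists (cast_ord (card_ord (nI k))); [apply: cast_ordKV | apply: cast_ordK].
  move=> u v /(OL_mem (@parI_hub k) hin1 hin2) [-> // | [Hu Hv]] /=.
  move: Hu Hv; rewrite /lvlI; case: ifP => Hu; case: ifP => Hv //; try lia.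
  all: try (case: ifP => //; lia).
- apply: leq_trans (OL_size (@parI k) hin1 hin2) _.
  rewrite SI HI card_ord /nI /k; nia.
Qed.
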